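(* Let $P,Q\subseteq\mathbb R^n$ be nonzero closed convex cones with $|\mathfrak s(P,Q)|\ne1$, and let $L$ be the smallest linear subspace of $\mathbb R^n$ containing both $P$ and $Q$. Let $\bar u$ be a solution of $\min_{u\in P\cap S_n}F_Q(u)$ such that $\mathtt{Proj}_{Q\cap S_n}(\bar u)$ is a singleton. Then $\bar u$ lies on the boundary of $P$ relative to $L$ (i.e., $\bar u$ is not an interior point of $P$ in the relative topology of $L$).
   Context: $S_n$ is the unit sphere of $\mathbb R^n$. $F_Q(u):=\max_{v\in Q\cap S_n}\langle u,v\rangle$, $\mathfrak s(P,Q):=\min_{u\in P\cap S_n}F_Q(u)$, and $\mathtt{Proj}_X(u):=\arg\min_{x\in X}\|x-u\|$. *)

(* Defs.v *)
(* R^n is modelled as 'rV[R]_n, R : realType. *)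
From HB Require Import structures.
From mathcomp Require Import all_boot all_order all_algebra.
From mathcomp Require Import all_classical all_reals all_analysis.
Set Implicit Arguments. Unset Strict Implicit. Unset Printing Implicit Defensive.
Import Order.TTheory GRing.Theory Num.Theory.
Import numFieldNormedType.Exports.
Local Open Scope classical_set_scope.
Local Open Scope ring_scope.

Section Defs.
Variables (R : realType) (n : nat).
Implicit Types (u v x : 'rV[R]_n) (P Q : set 'rV[R]_n).

Definition dotp u v : R := \sum_(i < n) u ord0 i * v ord0 i.
Definition enorm u : R := Num.sqrt (dotp u u).

Definition sphere : set 'rV[R]_n := [set u | enorm u = 1].

Definition is_cone P := forall x t, P x -> 0 <= t -> P (t *: x).
Definition is_convex P :=
  forall x y t, P x -> P y -> 0 <= t <= 1 -> P (t *: x + (1 - t) *: y).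
Definition nonzero_closed_convex_cone P :=
  [/\ closed P, is_convex P, is_cone P & exists x, P x /\ x != 0].

(* F_Q(u) = max_{v in Q ∩ S_n} <u,v>  (the max exists; written as a sup) *)
Definition FQ Q u : R := sup [set dotp u v | v in Q `&` sphere].

(* s(P,Q) = min_{u in P ∩ S_n} F_Q(u)  (written as an inf) *)
Definition sPQ P Q : R := inf [set FQ Q u | u in P `&` sphere].

Definition is_solution P Q ubar :=
  (P `&` sphere) ubar /\ forall u, (P `&` sphere) u -> FQ Q ubar <= FQ Q u.

Definition Proj (X : set 'rV[R]_n) u : set 'rV[R]_n :=
  [set x | X x /\ forall y, X y -> enorm (x - u) <= enorm (y - u)].

Definition is_singleton (A : set 'rV[R]_n) := exists x, A = [set x].

Definition is_subspace (L : set 'rV[R]_n) :=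
  [/\ L 0, (forall x y, L x -> L y -> L (x + y)) & (forall a x, L x -> L (a *: x))].
Definition span2 P Q : set 'rV[R]_n :=
  [set x | forall L, is_subspace L -> P `<=` L -> Q `<=` L -> L x].

Definition rel_interior_pt (L P : set 'rV[R]_n) x :=
  exists2 e : R, 0 < e & forall y, L y -> enorm (y - x) < e -> P y.
End Defs.

(* Main.v *)
Require Import Defs.
From HB Require Import structures.
From mathcomp Require Import all_boot all_order all_algebra.
From mathcomp Require Import all_classical all_reals all_analysis.
From mathcomp Require Import ring lra.
Import Order.TTheory GRing.Theory Num.Theory.
Import numFieldNormedType.Exports.
Local Open Scope classical_set_scope.
Local Open Scope ring_scope.
Set Implicit Arguments. Unset Strict Implicit.
Section S.
Variables (R : realType) (n : nat).
Implicit Types (u v w x y z : 'rV[R]_n).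
Lemma dotpDl x y z : dotp (x + y) z = dotp x z + dotp y z.
Proof. rewrite /dotp -big_split; apply: eq_bigr => i _; rewrite !mxE; exact: mulrDl. Qed.
Lemma dotpZl a x z : dotp (a *: x) z = a * dotp x z.
Proof. rewrite /dotp mulr_sumr; apply: eq_bigr => i _; rewrite !mxE; by rewrite mulrA. Qed.
Lemma dotpC x y : dotp x y = dotp y x.
Proof. by rewrite /dotp; apply: eq_bigr => i _; rewrite mulrC. Qed.
Lemma dotpNl x z : dotp (- x) z = - dotp x z.
Proof. by rewrite -scaleN1r dotpZl mulN1r. Qed.
Lemma dotpBl x y z : dotp (x - y) z = dotp x z - dotp y z.
Proof. by rewrite dotpDl dotpNl. Qed.
Lemma dotpDr x y z : dotp z (x + y) = dotp z x + dotp z y.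
Proof. by rewrite dotpC dotpDl !(dotpC z). Qed.
Lemma dotpZr a x z : dotp z (a *: x) = a * dotp z x.
Proof. by rewrite dotpC dotpZl dotpC. Qed.
Lemma dotpBr x y z : dotp z (x - y) = dotp z x - dotp z y.
Proof. by rewrite dotpC dotpBl !(dotpC z). Qed.
Lemma dotp_ge0 x : 0 <= dotp x x.
Proof. by apply: sumr_ge0 => i _; rewrite -expr2 sqr_ge0. Qed.
Lemma coord_sq_le x i : (x ord0 i)^+2 <= dotp x x.
Proof. rewrite /dotp (bigD1 i) //= -expr2 lerDl; apply: sumr_ge0 => j _; nra. Qed.
Lemma sphereE x : sphere x <-> dotp x x = 1.
Proof. rewrite /sphere /enorm /=; split.
- by move=> h; rewrite -[dotp x x]sqr_sqrtr ?dotp_ge0 // h expr1n.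
- by move=> ->; rewrite sqrtr1. Qed.
Lemma enorm_sq x : enorm x ^+ 2 = dotp x x.
Proof. by rewrite /enorm sqr_sqrtr ?dotp_ge0. Qed.
Lemma dotp_cont z : continuous (fun v : 'rV[R]_n => dotp z v).
Proof.
rewrite /dotp. elim: (index_enum _) => [|i r IH].
- under eq_fun do rewrite big_nil. exact: cst_continuous.
- under eq_fun do rewrite big_cons. move=> x.
  apply: (@continuousD _ R^o _ (fun v : 'rV[R]_n => z ord0 i * v ord0 i) (fun v => \sum_(j <- r) z ord0 j * v ord0 j)); last exact: IH.
  apply: (continuousM (s:=fun=> z ord0 i) (t:=fun v : 'rV[R]_n => v ord0 i)); first exact: cst_continuous.
  exact: coord_continuous.
Qed.
Lemma dotp_self_cont : continuous (fun v : 'rV[R]_n => dotp v v).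
Proof.
rewrite /dotp. elim: (index_enum _) => [|i r IH].
- under eq_fun do rewrite big_nil. exact: cst_continuous.
- under eq_fun do rewrite big_cons. move=> x.
  apply: (@continuousD _ R^o _ (fun v : 'rV[R]_n => v ord0 i * v ord0 i) (fun v => \sum_(j <- r) v ord0 j * v ord0 j)); last exact: IH.
  apply: (continuousM (s:=fun v : 'rV[R]_n => v ord0 i) (t:=fun v : 'rV[R]_n => v ord0 i)); exact: coord_continuous.
Qed.

Lemma dotp_sqB p q x y : dotp (p *: x - q *: y) (p *: x - q *: y) =
  p^+2 * dotp x x - 2 * p * q * dotp x y + q^+2 * dotp y y.
Proof.
rewrite !dotpBl !dotpBr !dotpZl !dotpZr (dotpC y x); ring.
Qed.

Lemma dotp_unit_bounds x y : sphere x -> sphere y -> -1 <= dotp x y <= 1.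
Proof.
move=> /sphereE hx /sphereE hy.
have h1 := dotp_ge0 (1 *: x - 1 *: y). have h2 := dotp_ge0 (1 *: x - (-1) *: y).
rewrite dotp_sqB hx hy in h1. rewrite dotp_sqB hx hy in h2.
apply/andP; split; nra.
Qed.

Lemma enorm_le_iff x y u : sphere x -> sphere y -> sphere u ->
  (enorm (x - u) <= enorm (y - u)) = (dotp y u <= dotp x u).
Proof.
move=> /sphereE hx /sphereE hy /sphereE hu.
rewrite /enorm ler_sqrt ?dotp_ge0 //.
have e1 := dotp_sqB 1 1 x u. have e2 := dotp_sqB 1 1 y u.
rewrite !scale1r in e1 e2. rewrite e1 e2 hx hy hu.
apply/idP/idP => h; nra.
Qed.

Lemma unit_coord_bound x : sphere x -> `|x| <= 1.
Proof.
move=> /sphereE hx.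
rewrite /Num.norm /= mx_normrE; apply: bigmax_le => // -[i j] _ /=.
have := coord_sq_le x j. rewrite hx.
have -> : i = ord0 by apply: val_inj; case: i => -[].
move=> h. have := normr_ge0 (x ord0 j). rewrite -[(x ord0 j)^+2]real_normK ?num_real in h; last by []. move=> h0; nra.
Qed.
Lemma FQ_eq (Q : set 'rV[R]_n) u vb : (Q `&` sphere (n:=n)) vb ->
  (forall y, (Q `&` sphere (n:=n)) y -> dotp u y <= dotp u vb) -> FQ Q u = dotp u vb.
Proof.
move=> Kvb hmax; rewrite /FQ; apply/eqP; rewrite eq_le; apply/andP; split.
- apply: ge_sup; first by exists (dotp u vb), vb.
  by move=> _ [y Ky <-]; exact: hmax.
- apply: sup_upper_bound; last by exists vb.
  split; first by exists (dotp u vb), vb.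
  by exists (dotp u vb) => _ [y Ky <-]; exact: hmax.
Qed.

Lemma FQ_le (Q : set 'rV[R]_n) u y0 M : (Q `&` sphere (n:=n)) y0 ->
  (forall y, (Q `&` sphere (n:=n)) y -> dotp u y <= M) -> FQ Q u <= M.
Proof.
move=> K0 hM; apply: ge_sup; first by exists (dotp u y0), y0.
by move=> _ [y Ky <-]; exact: hM.
Qed.

Lemma sPQ_eq (P Q : set 'rV[R]_n) ub : is_solution P Q ub -> sPQ P Q = FQ Q ub.
Proof.
move=> [Pu hmin]; rewrite /sPQ; apply/eqP; rewrite eq_le; apply/andP; split.
- apply: ge_inf; last by exists ub.
  by exists (FQ Q ub) => _ [u Pu' <-]; exact: hmin.
- apply: lb_le_inf; first by exists (FQ Q ub), ub.
  by move=> _ [u Pu' <-]; exact: hmin.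
Qed.
End S.

Theorem mainTheorem8 (R : realType) (n : nat) (P Q : set 'rV[R]_n)
  (ubar : 'rV[R]_n) :
  nonzero_closed_convex_cone P -> nonzero_closed_convex_cone Q ->
  `|sPQ P Q| != 1 ->
  is_solution P Q ubar ->
  is_singleton (Proj (Q `&` sphere (n:=n)) ubar) ->
  P ubar /\ ~ rel_interior_pt (span2 P Q) P ubar.
Proof.
move=> [clP cvP cnP _] [clQ cvQ cnQ _] hs hsol [vb hproj].
have [[Pub Sub] hmin] := hsol.
split=> //.
have : Proj (Q `&` sphere (n:=n)) ubar vb by rewrite hproj.
move=> [[Qvb Svb] hvb].
set K := Q `&` sphere (n:=n).
set c := dotp ubar vb.
have hmax : forall y, K y -> dotp ubar y <= c.
  move=> y [Qy Sy]; rewrite /c (dotpC ubar y) (dotpC ubar vb) -enorm_le_iff //.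
  exact: hvb.
have hF : FQ Q ubar = c by apply: FQ_eq.
have hsc : sPQ P Q = c by rewrite (sPQ_eq hsol).
have huniq : forall y, K y -> c <= dotp ubar y -> y = vb.
  move=> y Ky hy.
  have : Proj K ubar y.
    split=> // z Kz. case: (Ky) => Qy Sy. case: (Kz) => Qz Sz.
    rewrite enorm_le_iff // (dotpC z) (dotpC y). exact: le_trans (hmax z Kz) hy.
  by rewrite hproj => ->.
have /andP[cb1 cb2] : -1 <= c <= 1 := dotp_unit_bounds Sub Svb.
have hc2 : c^+2 != 1 by rewrite sqr_norm_eq1 -hsc.
set a := 1 - c^+2.
have a_pos : 0 < a.
  have hp : 0 <= (1 - c) * (1 + c) by apply: mulr_ge0; lra.
  have : c^+2 <= 1 by nra.
  by rewrite /a subr_gt0 lt_neqAle hc2.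
have a_le1 : a <= 1 by rewrite /a; nra.
set w := vb - c *: ubar.
have uu : dotp ubar ubar = 1 by apply/sphereE.
have vv : dotp vb vb = 1 by apply/sphereE.
have uw : dotp ubar w = 0 by rewrite /w dotpBr dotpZr uu mulr1 subrr.
have ww : dotp w w = a.
  have -> : w = 1 *: vb - c *: ubar by rewrite scale1r.
  rewrite dotp_sqB vv uu (dotpC vb) -/c /a; ring.
have wv : dotp w vb = a by rewrite /w dotpBl dotpZl vv -/c /a; ring.
have hbound : forall y, K y -> -2 <= dotp w y.
  move=> y [Qy Sy]; rewrite /w dotpBl dotpZl.
  have /andP[h1 h2] := dotp_unit_bounds Svb Sy.
  have /andP[h3 h4] := dotp_unit_bounds Sub Sy.
  nra.
set delta := a / 2.
set C := [set v | K v /\ dotp w v <= delta].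
have [eta eta_pos heta] : exists2 eta : R, 0 < eta & forall v, C v -> dotp ubar v <= c - eta.
  case: (pselect (exists v, C v)); last first.
    move=> nC; exists 1 => // v Cv; exfalso; exact: nC (ex_intro _ v Cv).
  move=> C0.
  have cC : compact C.
    apply: bounded_closed_compact.
      exists 1; split => // M M1 x [[_ Sx] _].
      exact: le_trans (unit_coord_bound Sx) (ltW M1).
    have -> : C = Q `&` ((fun v => dotp v v) @^-1` [set x | x = 1]) `&`
                 ((fun v => dotp w v) @^-1` [set x | x <= delta]).
      apply/seteqP; split => x /=.
        by move=> [[Qx /sphereE Sx] hx].
      by move=> [[Qx Sx] hx]; split => //; split => //; apply/sphereE.
    apply: closedI; first apply: closedI => //.
      apply: preimage_closed; last exact: closed_eq.
      by move=> x _; exact: dotp_self_cont.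
    apply: preimage_closed; last exact: closed_le.
    by move=> x _; exact: dotp_cont.
  have [vm Cvm hvm] := compact_EVT_max (f := fun v => dotp ubar v) C0 cC
     (continuous_subspaceT (@dotp_cont _ _ ubar)).
  have Cvm' : C vm by move: Cvm; rewrite inE.
  exists (c - dotp ubar vm).
    rewrite subr_gt0 lt_neqAle (hmax _ Cvm'.1) andbT.
    apply/negP => /eqP heq.
    have evm : vm = vb by apply: huniq; [exact: Cvm'.1 | rewrite heq].
    have := Cvm'.2; rewrite evm wv /delta; lra.
  move=> v Cv; have := hvm v (mem_set Cv) => /=; lra.
move=> [e e_pos hint].
set t := Num.min (Num.min (1/4) (eta/6)) (e/4).
have t_pos : 0 < t by rewrite /t !lt_min; apply/andP; split; [apply/andP; split|]; lra.
have t14 : t <= 1/4 by rewrite /t !ge_min lexx.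
have t_eta : t <= eta/6 by rewrite /t !ge_min lexx orbT.
have t_e : t <= e/4 by rewrite /t !ge_min lexx orbT.
set al := Num.sqrt (1 - t^+2 * a).
have arg_ge0 : 0 <= 1 - t^+2 * a by nra.
have al2 : al^+2 = 1 - t^+2 * a by rewrite sqr_sqrtr.
have al0 : 0 <= al := sqrtr_ge0 _.
have al1 : al <= 1 by nra.
have h1a : 1 - al <= t^+2 * a by nra.
set ut := al *: ubar - t *: w.
have Lut : span2 P Q ut.
  rewrite /span2 /=; move=> L; rewrite /is_subspace; case=> L0 LD LZ PL QL.
  have Lu := PL _ Pub. have Lv := QL _ Qvb.
  have LN : forall x, L x -> L (- x) by move=> x Lx; rewrite -scaleN1r; apply: (LZ).
  rewrite /ut /w. apply: (LD); first exact: (LZ).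
  apply: (LN); apply: (LZ); apply: (LD) => //; apply: (LN); exact: (LZ).
have Sut : sphere ut.
  apply/sphereE; rewrite /ut dotp_sqB uu uw ww al2; ring.
have dist : enorm (ut - ubar) < e.
  have -> : ut - ubar = (al - 1) *: ubar - t *: w.
    by rewrite /ut scalerBl scale1r addrAC.
  rewrite /enorm dotp_sqB uu uw ww.
  rewrite -[e in _ < e]gtr0_norm // -sqrtr_sqr ltr_sqrt ?exprn_gt0 //.
  nra.
have Put : P ut by apply: hint.
have := hmin ut (conj Put Sut). rewrite hF => hle.
have : FQ Q ut <= c - t * a / 4.
  apply: (@FQ_le _ _ _ _ vb) => // y Ky.
  rewrite /ut dotpBl !dotpZl.
  have /andP[g1 g2] := dotp_unit_bounds Sub Ky.2.
  have gc := hmax y Ky. have hb := hbound y Ky.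
  have hh : 0 <= (1 - al) * (1 + dotp ubar y) by apply: mulr_ge0; lra.
  have ht : 0 <= t * a * (1/4 - t) by apply: mulr_ge0; [apply: mulr_ge0|]; lra.
  case: (lerP (dotp w y) delta) => hd.
  - have ge := heta y (conj Ky hd). rewrite /delta in hd. nra.
  - rewrite /delta in hd. nra.
move=> hup.
have : 0 < t * a / 4 by apply: divr_gt0 => //; apply: mulr_gt0.
lra.
Qed.
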